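(* In the setting described in the context, assume the adjacency graph of the mesh (vertices $i$, edges the interior faces $i|j$) is connected and that at least one face of the mesh lies in $\Gamma_D$. Let $c^{l,n}\in\mathbb R^N$ satisfy $\min_ic^{l,n}_i>0$ for $l=1,\dots,M$, and let $T^n\in\mathbb R^N$ be arbitrary. Then for every $\Delta t>0$ there exists a unique $(c^{1,n+1},\dots,c^{M,n+1},\psi^{n+1})$ with $c^{l,n+1}_i>0$ for all $i,l$ satisfying equations (i) and (ii) of Scheme I. If moreover $T^n_i>0$ for all $i$ and $\Delta t<C_T/C_*$, where $C_*:=\max_i|P^{n+1}_i|$ (with $P^{n+1}$ computed from this $c^{l,n+1},\psi^{n+1}$), then equation (iii) of Scheme I has a unique solution $T^{n+1}$, and $T^{n+1}_i>0$ for $i=1,\dots,N$.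
   Context: Mesh. $\Omega\subset\mathbb R^d$ is a bounded polygonal/polyhedral domain with $\partial\Omega=\Gamma_D\cup\Gamma_N$, $\Gamma_D\cap\Gamma_N=\emptyset$. A Voronoi finite-volume mesh consists of points $\mathbf x_1,\dots,\mathbf x_N$ and control volumes $V_i=\{\mathbf y\in\Omega:|\mathbf y-\mathbf x_i|<|\mathbf y-\mathbf x_j|\ \forall j\ne i\}$. An interior face is $\sigma=\partial V_i\cap\partial V_j$ of positive $(d-1)$-measure, written $\sigma=i|j$; $\mathcal E_{int}$ is the set of interior faces and $\mathcal E_{i,int}$ those of $V_i$; $\mathcal E^D_{i,ext}$, $\mathcal E^N_{i,ext}$ are the faces of $\partial V_i$ lying in $\Gamma_D$, resp. $\Gamma_N$. $\mathrm m(\cdot)$ is Lebesgue measure (in dimension $d$ or $d-1$); $d_\sigma=|\mathbf x_i-\mathbf x_j|$ for $\sigma=i|j$ and $d_\sigma=\mathrm{dist}(\mathbf x_i,\sigma)$ for exterior faces of $V_i$; $\tau_\sigma=\mathrm m(\sigma)/d_\sigma$. Grid functions are vectors $u=(u_1,\dots,u_N)\in\mathbb R^N$; for $\sigma=i|j$, $Du_{i,\sigma}=u_j-u_i$. For positive $u$ and $\sigma=i|j$, $\mathcal A_\sigma u=\frac{(\mathrm m(V_i)+\mathrm m(V_j))u_iu_j}{\mathrm m(V_i)u_j+\mathrm m(V_j)u_i}$ (harmonic average). The discrete inner product is $(f,g)=\sum_{i=1}^N\mathrm m(V_i)f_ig_i$. Scheme I. Parameters: $\varepsilon>0$, $k>0$,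 $C_T>0$, $\Delta t>0$, $\nu^l>0$, $z^l\in\mathbb R$ ($l=1,\dots,M$), a grid function $\rho^f$, Dirichlet data $\psi^D_\sigma$ on $\Gamma_D$-faces and Neumann data $g_\sigma$ on $\Gamma_N$-faces. Given $c^{l,n}$ (positive), $T^n$, the unknowns $c^{l,n+1}$ (positive), $\psi^{n+1}$, $T^{n+1}$ satisfy, for $i=1,\dots,N$: (i) $\frac{c^{l,n+1}_i-c^{l,n}_i}{\Delta t}+\frac{\varepsilon}{\mathrm m(V_i)}\sum_{\sigma\in\mathcal E_{i,int}}\mathrm m(\sigma)F^l_{i,\sigma}=0$, where for $\sigma=i|j$ \[F^l_{i,\sigma}=-\frac{1}{\nu^l d_\sigma}\Big[\mathcal A_\sigma(c^{l,n})\,D\big(\log c^{l,n+1}+z^l\psi^{n+1}\big)_{i,\sigma}+D\big(c^{l,n}(T^n-1)\big)_{i,\sigma}\Big]\] (so $F^l_{j,\sigma}=-F^l_{i,\sigma}$), and the flux through exterior faces is zero (zero-flux boundary condition); (ii) $-\frac{\varepsilon^2}{\mathrm m(V_i)}\Big[\sum_{\sigma\in\mathcal E_{i,int}}\tau_\sigma D\psi^{n+1}_{i,\sigma}+\sum_{\sigma\in\mathcal E^D_{i,ext}}\tau_\sigma(\psi^D_\sigma-\psi^{n+1}_i)\Big]-\frac{1}{\mathrm m(V_i)}\sum_{\sigma\in\mathcal E^N_{i,ext}}\mathrm m(\sigma)g_\sigma=\sum_{l=1}^Mz^lc^{l,n+1}_i+\rho^f_i$; (iii) $C_T\frac{T^{n+1}_i-T^n_i}{\Delta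 t}=\frac{k}{\mathrm m(V_i)}\sum_{\sigma\in\mathcal E_{i,int}}\tau_\sigma DT^{n+1}_{i,\sigma}+T^{n+1}_iP^{n+1}_i+\varepsilon\sum_{l=1}^M\nu^lc^{l,n+1}_i|\hat{\mathbf u}^{l,n+1}_i|^2$ (thermally insulated boundary: no exterior-face terms), where \[P^{n+1}_i=\sum_{l=1}^M\Big[\frac{\varepsilon}{\mathrm m(V_i)}\sum_{\sigma\in\mathcal E_{i,int}}\mathrm m(\sigma)F^l_{i,\sigma}\lambda^l_\sigma+(1+\log c^{l,n+1}_i)\frac{c^{l,n+1}_i-c^{l,n}_i}{\Delta t}\Big],\] $\lambda^l_\sigma$ is a face value of $\log c^{l,n+1}$ depending only on $\sigma$ (the same from both sides), and $\hat{\mathbf u}^{l,n+1}_i\in\mathbb R^d$ are given cell-wise velocity reconstructions computed from $c^{l,n+1},\psi^{n+1},T^n$. *)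

(* Defs.v *)
From HB Require Import structures.
From mathcomp Require Import all_boot all_order all_algebra.
From mathcomp Require Import reals exp.
Set Implicit Arguments. Unset Strict Implicit. Unset Printing Implicit Defensive.
Import Order.TTheory GRing.Theory Num.Theory.
Local Open Scope ring_scope.

(*   fm i j       = m(sigma) for the interior face sigma = i|j               *)
(*                  (0 when V_i and V_j share no face of positive measure)   *)
(*   fd i j       = d_sigma = |x_i - x_j| for sigma = i|j                    *)
(*   dirF i       = list of Dirichlet exterior faces of V_i, each given as   *)
(*                  (m(sigma), d_sigma, psi^D_sigma)                         *)
(*   neuF i       = list of Neumann exterior faces of V_i, each given as     *)
(*                  (m(sigma), g_sigma)                                      *)
Record mesh (R : realType) (N : nat) := Mesh {
  vol  : 'I_N -> R;
  fm   : 'I_N -> 'I_N -> R;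
  fd   : 'I_N -> 'I_N -> R;
  dirF : 'I_N -> seq (R * R * R);
  neuF : 'I_N -> seq (R * R)
}.

Section Scheme.
Variables (R : realType) (N : nat).
Implicit Types (T : mesh R N).

Definition adj T : rel 'I_N := fun i j => 0 < fm T i j.

Definition mesh_ok T : Prop :=
  (forall i, 0 < vol T i) /\
  (forall i j, fm T i j = fm T j i /\ fd T i j = fd T j i) /\
  (forall i j, 0 <= fm T i j) /\
  (forall i, fm T i i = 0) /\
  (forall i j, adj T i j -> 0 < fd T i j) /\
  (forall i s, s \in dirF T i -> 0 < s.1.1 /\ 0 < s.1.2) /\
  (forall i s, s \in neuF T i -> 0 < s.1).

Definition mesh_connected T : Prop := forall i j, connect (adj T) i j.

Definition has_dirichlet_face T : Prop := exists i, dirF T i != [::].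

Definition tau T (i j : 'I_N) : R := fm T i j / fd T i j.

Definition harm T (u : 'I_N -> R) (i j : 'I_N) : R :=
  (vol T i + vol T j) * u i * u j / (vol T i * u j + vol T j * u i).

Definition Dd (u : 'I_N -> R) (i j : 'I_N) : R := u j - u i.

(* Flux F^l_{i,sigma}, sigma = i|j, for species with parameters nu, zl;
   cn = c^{l,n}, cnp = c^{l,n+1}, psi = psi^{n+1}, Tn = T^n *)
Definition flux T (nu zl : R) (cn cnp psi Tn : 'I_N -> R) (i j : 'I_N) : R :=
  - (1 / (nu * fd T i j)) *
    (harm T cn i j * Dd (fun k => ln (cnp k) + zl * psi k) i j
     + Dd (fun k => cn k * (Tn k - 1)) i j).

Variable M : nat.

Definition eq_i T (eps dt : R) (nu z : 'I_M -> R)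
    (cn cnp : 'I_M -> 'I_N -> R) (psi Tn : 'I_N -> R) : Prop :=
  forall (l : 'I_M) (i : 'I_N),
    (cnp l i - cn l i) / dt
    + eps / vol T i * (\sum_(j | adj T i j)
                         fm T i j * flux T (nu l) (z l) (cn l) (cnp l) psi Tn i j)
    = 0.

Definition eq_ii T (eps : R) (z : 'I_M -> R) (rhof : 'I_N -> R)
    (cnp : 'I_M -> 'I_N -> R) (psi : 'I_N -> R) : Prop :=
  forall i : 'I_N,
    - (eps ^+ 2 / vol T i) *
      ((\sum_(j | adj T i j) tau T i j * Dd psi i j)
       + \sum_(s <- dirF T i) (s.1.1 / s.1.2) * (s.2 - psi i))
    - 1 / vol T i * (\sum_(s <- neuF T i) s.1 * s.2)
    = \sum_(l < M) z l * cnp l i + rhof i.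

(* P^{n+1}_i; lam l i j = lambda^l_sigma for sigma = i|j *)
Definition Pn T (eps dt : R) (nu z : 'I_M -> R)
    (cn cnp : 'I_M -> 'I_N -> R) (psi Tn : 'I_N -> R)
    (lam : 'I_M -> 'I_N -> 'I_N -> R) (i : 'I_N) : R :=
  \sum_(l < M)
    (eps / vol T i * (\sum_(j | adj T i j)
        fm T i j * flux T (nu l) (z l) (cn l) (cnp l) psi Tn i j * lam l i j)
     + (1 + ln (cnp l i)) * ((cnp l i - cn l i) / dt)).

Definition sqnorm (d : nat) (u : 'rV[R]_d) : R := \sum_(k < d) u 0 k ^+ 2.

Definition eq_iii T (eps dt k CT : R) (nu z : 'I_M -> R)
    (cn cnp : 'I_M -> 'I_N -> R) (psi Tn : 'I_N -> R)
    (lam : 'I_M -> 'I_N -> 'I_N -> R) (d : nat) (uh : 'I_M -> 'I_N -> 'rV[R]_d)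
    (Tnp : 'I_N -> R) : Prop :=
  forall i : 'I_N,
    CT * ((Tnp i - Tn i) / dt)
    = k / vol T i * (\sum_(j | adj T i j) tau T i j * Dd Tnp i j)
      + Tnp i * Pn T eps dt nu z cn cnp psi Tn lam i
      + eps * (\sum_(l < M) nu l * cnp l i * sqnorm (uh l i)).

End Scheme.

(* Main.v *)
Require Import Defs.
From HB Require Import structures.
From mathcomp Require Import all_boot all_order all_algebra.
From mathcomp Require Import reals exp.
From mathcomp Require Import all_classical all_reals all_analysis.
From mathcomp Require Import ring lra.
Import Order.TTheory GRing.Theory Num.Theory.
Import numFieldTopology.Exports numFieldNormedType.Exports.
Local Open Scope classical_set_scope.
Local Open Scope ring_scope.
Set Implicit Arguments. Unset Strict Implicit. Unset Printing Implicit Defensive.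


Definition dotv (R : realType) n (a : 'I_n -> R) (x : 'rV[R]_n) : R :=
  \sum_(k < n) a k * x ord0 k.

Definition PhiA (R : realType) (P : finType) n (F : P -> R -> R) (c : P -> R)
  (al : P -> 'I_n -> R) (x : 'rV[R]_n) : R :=
  \sum_p F p (c p + dotv (al p) x).

Lemma cont_sum (R : realType) (T : topologicalType) (I : finType) (f : I -> T -> R) :
  (forall i, continuous (f i)) -> continuous (fun x => \sum_i f i x).
Proof.
move=> H.
have -> : (fun x => \sum_i f i x) = \sum_i f i by rewrite fct_sumE.
elim/big_ind: _ => //.
- by move=> x; apply: cst_continuous.
- by move=> g h Hg Hh x; exact: (continuousD (Hg x) (Hh x)).
Qed.

Lemma dotv_cont (R : realType) n (a : 'I_n -> R) : continuous (dotv a).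
Proof.
change (continuous (fun x : 'rV[R]_n => \sum_(k<n) (fun k (x : 'rV[R]_n) => a k * x ord0 k) k x)).
apply: cont_sum => k x.
apply: (@continuousM _ _ (fun=> a k) (fun x : 'rV[R]_n => x ord0 k)).
  exact: cst_continuous.
exact: coord_continuous.
Qed.

Lemma PhiA_cont (R : realType) (P : finType) n (F : P -> R -> R) (c : P -> R)
  (al : P -> 'I_n -> R) : (forall p, continuous (F p)) -> continuous (PhiA F c al).
Proof.
move=> HF; apply: (@cont_sum _ _ _ (fun p x => F p (c p + dotv (al p) x))) => p x.
apply: (@continuous_comp _ _ _ (fun x => c p + dotv (al p) x) (F p)); last exact: HF.
apply: (@continuousD _ _ _ (fun=> c p) (dotv (al p))); first exact: cst_continuous.
exact: dotv_cont.
Qed.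

Lemma le_sum_norm (R : realType) (I : finType) (B : I -> R) k :
  `|B k| <= \sum_j `|B j|.
Proof.
rewrite (bigD1 k) //= lerDl; apply: sumr_ge0 => j _; exact: normr_ge0.
Qed.

Lemma PhiA_min (R : realType) (P : finType) n (F : P -> R -> R) (c : P -> R)
  (al : P -> 'I_n -> R) : (forall p, continuous (F p)) ->
  (forall k, exists B, forall x, PhiA F c al x <= PhiA F c al 0 -> `|x ord0 k| <= B) ->
  exists x, forall y, PhiA F c al x <= PhiA F c al y.
Proof.
move=> HF /fin_all_exists [B HB].
set Bm := \sum_k `|B k| + 1.
set A := [set v : 'rV[R]_n | forall i, `[- Bm, Bm]%classic (v ord0 i)]%classic.
have cA : compact A.
  apply: (@rV_compact _ _ (fun=> `[- Bm, Bm]%classic)) => i.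
  exact: segment_compact.
have A0 : (A !=set0)%classic.
  exists 0 => i /=; rewrite mxE in_itv /= -ler_norml normr0.
  by rewrite /Bm addr_ge0 // sumr_ge0 // => j _; exact: normr_ge0.
have cP : {within A, continuous (PhiA F c al)}.
  apply: continuous_subspaceT; exact: PhiA_cont.
have [x xA Hx] := EVT_min_rV A0 cA cP.
exists x => y.
have [hy|hy] := leP (PhiA F c al y) (PhiA F c al 0); last first.
  apply: (le_trans _ (ltW hy)); apply: Hx; rewrite in_setE => i /=.
  rewrite mxE in_itv /= -ler_norml normr0.
  by rewrite /Bm addr_ge0 // sumr_ge0 // => j _; exact: normr_ge0.
apply: Hx; rewrite in_setE => i /=; rewrite in_itv /= -ler_norml.
apply: (le_trans (HB i y hy)); apply: (le_trans (ler_norm _)).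
by rewrite /Bm (le_trans (le_sum_norm B i)) // lerDl.
Qed.



Lemma dotv_shift (R : realType) n (a : 'I_n -> R) (x : 'rV[R]_n) k t :
  dotv a (x + t *: delta_mx 0 k) = dotv a x + t * a k.
Proof.
rewrite /dotv.
have E : forall j, a j * (x + t *: delta_mx 0 k) ord0 j = a j * x ord0 j + (if j == k then t * a k else 0).
  move=> j; rewrite !mxE /=.
  by case: eqP => [->|_]; rewrite /= ?mulr1n ?mulr0n ?mulr1 ?mulr0 ?addr0 // mulrDr [t * _]mulrC.
rewrite (eq_bigr _ (fun j _ => E j)) big_split /=; congr (_ + _).
by rewrite -big_mkcond /= big_pred1_eq.
Qed.

Lemma aff_derive (R : realType) (u a t : R) : is_derive t 1 (fun s : R => u + s * a) a.
Proof.
have h1 := @is_derive_cst R R^o R^o u t 1.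
have h2 := @is_derive_id R R^o t 1.
have h3 := @is_derive_cst R R^o R^o a t 1.
have h4 := is_deriveD h1 (is_deriveM h2 h3).
apply: (is_derive_eq h4).
by rewrite /= scaler0 add0r /GRing.scale /= mulr1 add0r.
Qed.

Lemma PhiA_grad (R : realType) (P : finType) n (F dF : P -> R -> R) (c : P -> R)
  (al : P -> 'I_n -> R) (x : 'rV[R]_n) :
  (forall p (u : R), is_derive u (1 : R) (F p) (dF p u)) ->
  (forall y, PhiA F c al x <= PhiA F c al y) ->
  forall k, \sum_p dF p (c p + dotv (al p) x) * al p k = 0.
Proof.
move=> HF hmin k.
set f := fun t : R => PhiA F c al (x + t *: delta_mx 0 k).
set G := fun p (t : R) => F p ((c p + dotv (al p) x) + t * al p k).
have fE : f = \sum_p G p.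
  rewrite fct_sumE; apply: funext => t.
  by rewrite /f /PhiA; apply: eq_bigr => p _; rewrite /G dotv_shift addrA.
have Hd : forall t : R, is_derive t (1 : R) f
    (\sum_p dF p ((c p + dotv (al p) x) + t * al p k) * al p k).
  move=> t; rewrite fE.
  elim/big_ind2: _ => [|g1 d1 g2 d2 h1 h2|p _].
  - exact: is_derive_cst.
  - exact: is_deriveD.
  - have h1 := HF p ((c p + dotv (al p) x) + t * al p k).
    have h2 := aff_derive (c p + dotv (al p) x) (al p k) t.
    exact: (@is_derive1_comp R (F p) (fun s => c p + dotv (al p) x + s * al p k) t _ _ h1 h2).
have H0 : is_derive (0:R) (1:R) f 0.
  apply: (@derive1_at_min _ f (-1) 1 0).
  - by rewrite (@le_trans _ _ 0) // ?lerN10 ?ler01.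
  - move=> t _; exact: (@ex_derive _ _ _ _ _ _ _ (Hd t)).
  - by rewrite in_itv /= ltrN10 ltr01.
  - move=> t _; rewrite /f scale0r addr0; exact: hmin.
have := Hd 0; under eq_bigr do rewrite mul0r addr0.
move=> H1; have := derive_val (is_derive := H1); rewrite (derive_val (is_derive := H0)).
by move=> <-.
Qed.


Definition Fq (R : realType) (A B C : R) (u : R) : R := A * expR u + B * (u * u) + C * u.
Definition dFq (R : realType) (A B C : R) (u : R) : R := A * expR u + 2 * B * u + C.

Lemma Fq_derive (R : realType) (A B C u : R) : is_derive u (1:R) (Fq A B C) (dFq A B C u).
Proof.
have hA := @is_derive_cst R R^o R^o A u 1.
have hB := @is_derive_cst R R^o R^o B u 1.
have hC := @is_derive_cst R R^o R^o C u 1.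
have hi := @is_derive_id R R^o u 1.
have he := @is_derive_expR R u.
have h := is_deriveD (is_deriveD (is_deriveM hA he) (is_deriveM hB (is_deriveM hi hi)))
   (is_deriveM hC hi).
apply: (is_derive_eq h).
rewrite /dFq /= /GRing.scale /=.
rewrite !mulr0 !addr0 !mulr1; ring.
Qed.

Lemma Fq_cont (R : realType) (A B C : R) : continuous (Fq A B C).
Proof.
move=> u; apply: differentiable_continuous; apply/derivable1_diffP.
exact: (@ex_derive _ _ _ _ _ _ _ (@Fq_derive R A B C u)).
Qed.

Lemma PhiQ_exists_min (R : realType) (P : finType) n (A B C : P -> R)
  (al : P -> 'I_n -> R) :
  let Phi := PhiA (fun p => Fq (A p) (B p) (C p)) (fun=> 0) al in
  (forall k, exists Bd, forall x, Phi x <= Phi 0 -> `|x ord0 k| <= Bd) ->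
  exists x, forall k, \sum_p dFq (A p) (B p) (C p) (dotv (al p) x) * al p k = 0.
Proof.
move=> Phi Hb.
have [x Hx] := PhiA_min (fun p => @Fq_cont R (A p) (B p) (C p)) Hb.
exists x => k.
have := PhiA_grad (fun p u => @Fq_derive R (A p) (B p) (C p) u) Hx k.
by under eq_bigr do rewrite add0r.
Qed.


Lemma sq_add_le (R : realType) (u v : R) : (u + v) ^+ 2 <= 2 * u ^+ 2 + 2 * v ^+ 2.
Proof. have := sqr_ge0 (u - v); rewrite sqrrB sqrrD; lra. Qed.

Lemma path_sq_bound (R : realType) (I : finType) (e : rel I) (y : I -> R) (S : R) :
  0 <= S -> (forall a b, e a b -> (y b - y a) ^+ 2 <= S) ->
  forall p a, path e a p -> (y (last a p) - y a) ^+ 2 <= 4 ^+ size p * S.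
Proof.
move=> S0 He; elim=> [|b p IH] a /=.
  by rewrite subrr expr0n /= mul1r.
move=> /andP [eab pb].
have h1 := IH b pb; have h2 := He a b eab.
have -> : y (last b p) - y a = (y (last b p) - y b) + (y b - y a) by ring.
apply: (le_trans (sq_add_le _ _)).
have h3 : 1 <= (4 : R) ^+ size p by apply: exprn_ege1; rewrite ler1n.
rewrite (exprS (4:R) (size p)) -mulrA.
have h5 : S <= (4 : R) ^+ size p * S by rewrite ler_peMl.
lra.
Qed.

Lemma antisym_sum (R : realType) (I : finType) (w : I -> I -> R) (g : I -> R) :
  (forall i j, w i j = w j i) -> \sum_i \sum_j w i j * (g j - g i) = 0.
Proof.
move=> Hw; set S := \sum_i _.
have E : S = - S.
  rewrite {1}/S exchange_big /= /S -sumrN; apply: eq_bigr => i _.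
  rewrite -sumrN; apply: eq_bigr => j _; rewrite Hw; ring.
lra.
Qed.

Lemma term_le (R : realType) (I : finType) (f g : I -> R) (B : R) i0 :
  \sum_i f i <= B -> (forall i, g i <= f i) -> f i0 <= B + \sum_i `|g i|.
Proof.
move=> Hs Hg; move: Hs; rewrite (bigD1 i0) //= => Hs.
have : - \sum_(i | i != i0) `|g i| <= \sum_(i | i != i0) f i.
  rewrite -sumrN; apply: ler_sum => i _.
  apply: (le_trans _ (Hg i)); rewrite lerNl -normrN; exact: ler_norm.
have : \sum_(i | i != i0) `|g i| <= \sum_i `|g i|.
  rewrite [X in _ <= X](bigD1 i0) //= lerDr; exact: normr_ge0.
lra.
Qed.

Lemma exp_lin_lb (R : realType) (c y : R) : 0 < c ->
  c / (c + 1) * `|y| - (c + 1) ^+ 2 / 2 <= expR y - c * y.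
Proof.
move=> c0.
have c1 : 0 < c + 1 by lra.
have m1 : c / (c + 1) <= 1 by rewrite ler_pdivrMr // mul1r; lra.
have m2 : c / (c + 1) <= c by rewrite ler_pdivrMr // ler_peMr //; lra.
have m0 : 0 <= c / (c + 1) by rewrite divr_ge0 // ltW.
have K0 : 0 <= (c + 1) ^+ 2 / 2 by rewrite divr_ge0 // sqr_ge0.
have [y0|y0] := leP 0 y.
  rewrite ger0_norm //.
  have H : 1 + y ^+ 2 / 2 <= expR y by exact: (@expR_ge1Dxn R y 1 y0).
  have H2 : 0 <= (y - (c + 1)) ^+ 2 / 2 by rewrite divr_ge0 // sqr_ge0.
  have H3 : c / (c + 1) * y <= y by rewrite ler_piMl.
  have H4 : 0 <= (y - (c + 1)) ^+ 2 by exact: sqr_ge0.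
  rewrite sqrrB in H4.
  nra.
rewrite ltr0_norm //.
have e0 := expR_gt0 y.
have H5 : c / (c + 1) * - y <= c * - y by rewrite ler_pM2r // oppr_gt0.
lra.
Qed.

Lemma le_sum1 (R : realType) (I : finType) (f : I -> R) i :
  (forall j, 0 <= f j) -> f i <= \sum_j f j.
Proof. by move=> H; rewrite (bigD1 i) //= lerDl sumr_ge0. Qed.

Lemma le_dsum (R : realType) (I J : finType) (f : I -> J -> R) a b :
  (forall i j, 0 <= f i j) -> f a b <= \sum_i \sum_j f i j.
Proof.
move=> H; apply: (le_trans (@le_sum1 _ _ (f a) b (H a))).
apply: (@le_sum1 _ _ (fun i => \sum_j f i j)) => i; exact: sumr_ge0.
Qed.

Lemma absorb (R : realType) (I : finType) (b P : I -> R) : (forall i, 0 < P i) ->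
  exists C, forall (d : I -> R) (Q : R), 0 <= Q -> (forall i, d i ^+ 2 <= P i * Q) ->
    \sum_i `|b i * d i| <= Q + C.
Proof.
move=> HP; set n : R := #|I|%:R + 1.
have n0 : 0 < n by rewrite /n ltr_pwDr // ler0n.
exists (\sum_i b i ^+ 2 * (n * P i) / 4) => d Q Q0 Hd.
have key : forall i, `|b i * d i| <= Q / n + b i ^+ 2 * (n * P i) / 4.
  move=> i; set s := n * P i; have s0 : 0 < s by rewrite mulr_gt0.
  set a := `|b i|; set u := `|d i|.
  have a0 : 0 <= a by exact: normr_ge0.
  have u0 : 0 <= u by exact: normr_ge0.
  have hu : u ^+ 2 = d i ^+ 2 by rewrite /u real_normK // num_real.
  have ha : a ^+ 2 = b i ^+ 2 by rewrite /a real_normK // num_real.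
  rewrite normrM -/a -/u -ha.
  have h1 : a * u * s <= u ^+ 2 + a ^+ 2 * s ^+ 2 / 4.
    have := sqr_ge0 (u - a * s / 2); rewrite sqrrB; nra.
  have h2 : a * u <= (u ^+ 2 + a ^+ 2 * s ^+ 2 / 4) / s by rewrite ler_pdivlMr.
  have h3 : (u ^+ 2 + a ^+ 2 * s ^+ 2 / 4) / s = u ^+ 2 / s + a ^+ 2 * s / 4.
    by field; rewrite gt_eqF.
  have h4 : u ^+ 2 / s <= Q / n.
    rewrite ler_pdivrMr // hu.
    have -> : Q / n * s = P i * Q by rewrite /s; field; rewrite gt_eqF.
    exact: Hd.
  lra.
apply: (le_trans (ler_sum _ (fun i _ => key i))).
rewrite big_split /= sumr_const lerD2r -mulr_natr.
have k0 : (#|xpredT : pred I|%:R : R) <= n by rewrite /n cardT lerDl.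
rewrite mulrAC ler_pdivrMr //; nra.
Qed.

Lemma poincare (R : realType) (I : finType) (e : rel I) (W : I -> I -> R) :
  (forall a b, 0 <= W a b) -> (forall a b, e a b -> 0 < W a b) ->
  forall i0 i, connect e i0 i ->
  exists P, 0 < P /\ forall y : I -> R,
    (y i - y i0) ^+ 2 <= P * \sum_a \sum_b W a b * (y b - y a) ^+ 2.
Proof.
move=> W0 We i0 i /connectP [p pth ->].
set Winv := \sum_a \sum_b (if e a b then 1 / W a b else 0).
have Wi0 : 0 <= Winv.
  apply: sumr_ge0 => a _; apply: sumr_ge0 => b _.
  by case: ifP => // /We h; rewrite divr_ge0 // ltW.
exists (4 ^+ size p * Winv + 1); split.
  by rewrite ltr_pwDr // mulr_ge0 // exprn_ge0.
move=> y; set Q := \sum_a _.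
have Q0 : 0 <= Q.
  apply: sumr_ge0 => a _; apply: sumr_ge0 => b _; by rewrite mulr_ge0 ?W0 // sqr_ge0.
have He : forall a0 b0, e a0 b0 -> (y b0 - y a0) ^+ 2 <= Winv * Q.
  move=> a0 b0 eab; have w0 := We a0 b0 eab.
  have h1 : W a0 b0 * (y b0 - y a0) ^+ 2 <= Q.
    apply: (@le_dsum _ _ _ (fun a b => W a b * (y b - y a) ^+ 2)) => c d.
    by rewrite mulr_ge0 ?W0 // sqr_ge0.
  have h2 : 1 / W a0 b0 <= Winv.
    have H := @le_dsum _ _ _ (fun a b => if e a b then 1 / W a b else 0) a0 b0.
    rewrite /= eab in H; apply: H => c d.
    by case: ifP => // /We h; apply: divr_ge0 => //; exact: ltW.
  have h3 : (y b0 - y a0) ^+ 2 <= 1 / W a0 b0 * Q.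
    by rewrite mul1r ler_pdivlMl // mulrC.
  apply: (le_trans h3); exact: (ler_wpM2r Q0 h2).
have := path_sq_bound (mulr_ge0 Wi0 Q0) He pth.
move=> h; apply: (le_trans h).
rewrite mulrDl mul1r mulrA lerDl //.
Qed.


Section Conc.
Variables (R : realType) (N M : nat) (T : mesh R N) (eps dt : R) (nu z : 'I_M -> R)
  (rhof : 'I_N -> R) (cn : 'I_M -> 'I_N -> R) (Tn : 'I_N -> R).
Hypothesis Hvol : forall i, 0 < vol T i.
Hypothesis Hdt : 0 < dt.

Lemma vne i : vol T i != 0.
Proof. by have := Hvol i; rewrite lt0r => /andP []. Qed.
Lemma dtne : dt != 0.
Proof. by have := Hdt; rewrite lt0r => /andP []. Qed.


Definition aw l i j : R :=
  if adj T i j then fm T i j / (nu l * fd T i j) * harm T (cn l) i j else 0.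
Definition bw l i j : R := if adj T i j then fm T i j / (nu l * fd T i j) else 0.
Definition gg l k := cn l k * (Tn k - 1).
Definition beta l i := \sum_j bw l i j * (gg l j - gg l i).
Definition tw i j : R := if adj T i j then tau T i j else 0.
Definition Wd i := \sum_(s <- dirF T i) s.1.1 / s.1.2.
Definition Gd i := \sum_(s <- dirF T i) s.1.1 / s.1.2 * s.2.
Definition neu i := \sum_(s <- neuF T i) s.1 * s.2.

Definition res1 (c : 'I_M -> 'I_N -> R) (psi : 'I_N -> R) l i :=
  vol T i * (c l i - cn l i) / dt
  - eps * \sum_j aw l i j * ((ln (c l j) + z l * psi j) - (ln (c l i) + z l * psi i))
  - eps * beta l i.

Definition res2 (c : 'I_M -> 'I_N -> R) (psi : 'I_N -> R) i :=
  - eps ^+ 2 * (\sum_j tw i j * (psi j - psi i) + Gd i - Wd i * psi i) - neu i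
  - vol T i * (\sum_(l < M) z l * c l i + rhof i).

Lemma flux_sum c psi l i :
  \sum_(j | adj T i j) fm T i j * flux T (nu l) (z l) (cn l) (c l) psi Tn i j
  = - \sum_j aw l i j * ((ln (c l j) + z l * psi j) - (ln (c l i) + z l * psi i))
    - beta l i.
Proof.
rewrite big_mkcond /= /beta -sumrN -sumrB; apply: eq_bigr => j _.
rewrite /aw /bw /flux /Dd /gg; case: (adj T i j); last by rewrite !mul0r subr0 oppr0.
rewrite /=; ring.
Qed.

Lemma eq_i_res c psi :
  eq_i T eps dt nu z cn c psi Tn <-> forall l i, res1 c psi l i = 0.
Proof.
have E : forall l i, (c l i - cn l i) / dt + eps / vol T i *
    (\sum_(j | adj T i j) fm T i j * flux T (nu l) (z l) (cn l) (c l) psi Tn i j)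
    = res1 c psi l i / vol T i.
  move=> l i; rewrite flux_sum /res1.
  by field; rewrite ?vne ?dtne.
split => H l i.
  have := H l i; rewrite E => /eqP; rewrite mulf_eq0 invr_eq0.
  by rewrite (negbTE (vne i)) orbF => /eqP.
by rewrite E H mul0r.
Qed.

Lemma eq_ii_res c psi :
  eq_ii T eps z rhof c psi <-> forall i, res2 c psi i = 0.
Proof.
have E : forall i, \sum_(s <- dirF T i) s.1.1 / s.1.2 * (s.2 - psi i) = Gd i - Wd i * psi i.
  move=> i; rewrite /Gd /Wd mulr_suml -sumrB; apply: eq_bigr => s _; ring.
have E1 : forall i, \sum_(j | adj T i j) tau T i j * Dd psi i j
    = \sum_j tw i j * (psi j - psi i).
  move=> i; rewrite big_mkcond /=; apply: eq_bigr => j _.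
  by rewrite /tw /Dd; case: (adj T i j); rewrite ?mul0r.
have E2 : forall i,
  (- (eps ^+ 2 / vol T i) *
      ((\sum_(j | adj T i j) tau T i j * Dd psi i j)
       + \sum_(s <- dirF T i) (s.1.1 / s.1.2) * (s.2 - psi i))
    - 1 / vol T i * (\sum_(s <- neuF T i) s.1 * s.2))
    - (\sum_(l < M) z l * c l i + rhof i) = res2 c psi i / vol T i.
  move=> i; rewrite E E1 -/(neu i) /res2; by field; rewrite ?vne ?dtne.
split => H i.
  have := H i => /eqP; rewrite -subr_eq0 E2 mulf_eq0 invr_eq0 (negbTE (vne i)) orbF.
  by move/eqP.
by apply/eqP; rewrite -subr_eq0 E2 H mul0r.
Qed.


Hypothesis Hok : mesh_ok T.
Hypothesis Hnu : forall l, 0 < nu l.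
Hypothesis Hcn : forall l i, 0 < cn l i.

Lemma natr_andb (a b : bool) : ((a && b)%:R : R) = a%:R * b%:R.
Proof. by case: a; case: b; rewrite ?mulr1 ?mulr0 ?mul0r. Qed.

Lemma sum_delta (I : finType) (f : I -> R) a : \sum_i f i * (a == i)%:R = f a.
Proof.
rewrite (bigD1 a) //= eqxx mulr1 big1 ?addr0 // => i /negbTE.
by rewrite eq_sym => ->; rewrite mulr0.
Qed.

Lemma sum_pair (I J : finType) (G : I * J -> R) :
  \sum_p G p = \sum_i \sum_j G (i, j).
Proof. by rewrite pair_big; apply: eq_bigr => -[]. Qed.

Definition VV := ('I_M * 'I_N + 'I_N)%type.
Definition nV := #|{: VV}|.
Definition ix (v : VV) : 'I_nV := enum_rank v.
Definition ind (v : VV) (k : 'I_nV) : R := (k == ix v)%:R.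
Definition PP := (('I_M * 'I_N + 'I_M * 'I_N) + ('I_M * 'I_N * 'I_N + ('I_N * 'I_N + 'I_N)))%type.

Definition alpha (p : PP) : 'I_nV -> R :=
  match p with
  | inl (inl q) => fun k => ind (inl q) k - z q.1 * ind (inr q.2) k
  | inl (inr q) => ind (inl q)
  | inr (inl q) => fun k => ind (inl (q.1.1, q.2)) k - ind (inl q.1) k
  | inr (inr (inl q)) => fun k => ind (inr q.2) k - ind (inr q.1) k
  | inr (inr (inr i)) => ind (inr i)
  end.
Definition cA (p : PP) : R :=
  match p with inl (inl q) => vol T q.2 / dt | _ => 0 end.
Definition cB (p : PP) : R :=
  match p with
  | inr (inl q) => eps / 4 * aw q.1.1 q.1.2 q.2
  | inr (inr (inl q)) => eps ^+ 2 / (4 * dt) * tw q.1 q.2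
  | inr (inr (inr i)) => eps ^+ 2 / dt * Wd i / 2
  | _ => 0 end.
Definition cC (p : PP) : R :=
  match p with
  | inl (inr q) => - (vol T q.2 * cn q.1 q.2 / dt + eps * beta q.1 q.2)
  | inr (inr (inr i)) => - (eps ^+ 2 / dt * Gd i + (neu i + vol T i * rhof i) / dt)
  | _ => 0 end.

Definition mu (x : 'rV[R]_nV) l i := x ord0 (ix (inl (l, i))).
Definition ps (x : 'rV[R]_nV) i := x ord0 (ix (inr i)).

Lemma ind_ix v w : ind v (ix w) = (w == v)%:R.
Proof. by rewrite /ind /ix (inj_eq enum_rank_inj). Qed.

Lemma dotv_ind v x : dotv (ind v) x = x ord0 (ix v).
Proof.
rewrite /dotv (bigD1 (ix v)) //= /ind eqxx mul1r big1 ?addr0 // => k /negbTE ->.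
by rewrite mul0r.
Qed.

Lemma dotvB (a b : 'I_nV -> R) x : dotv (fun k => a k - b k) x = dotv a x - dotv b x.
Proof. by rewrite /dotv -sumrB; apply: eq_bigr => k _; rewrite mulrBl. Qed.

Lemma dotvBZ (a b : 'I_nV -> R) s x :
  dotv (fun k => a k - s * b k) x = dotv a x - s * dotv b x.
Proof.
by rewrite /dotv mulr_sumr -sumrB; apply: eq_bigr => k _; rewrite mulrBl mulrA.
Qed.

Definition Gr x k := \sum_p dFq (cA p) (cB p) (cC p) (dotv (alpha p) x) * alpha p k.

Lemma Gr_split x k : Gr x k =
    \sum_q dFq (cA (inl (inl q))) 0 0 (dotv (alpha (inl (inl q))) x) * alpha (inl (inl q)) k
  + \sum_q cC (inl (inr q)) * alpha (inl (inr q)) k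
  + \sum_q (2 * cB (inr (inl q)) * dotv (alpha (inr (inl q))) x) * alpha (inr (inl q)) k
  + \sum_q (2 * cB (inr (inr (inl q))) * dotv (alpha (inr (inr (inl q)))) x)
       * alpha (inr (inr (inl q))) k
  + \sum_i (2 * cB (inr (inr (inr i))) * dotv (alpha (inr (inr (inr i)))) x
              + cC (inr (inr (inr i)))) * alpha (inr (inr (inr i))) k.
Proof.
rewrite /Gr !big_sumType /= !addrA; congr (_ + _ + _ + _ + _); apply: eq_bigr => q _;
  rewrite /dFq /= ?(mul0r, mulr0, add0r, addr0) //.
Qed.

Lemma sum_pair_delta1 (I J : finType) (h : I * J -> R) a :
  \sum_q h q * (a == q.1)%:R = \sum_j h (a, j).
Proof.
rewrite sum_pair; under eq_bigr do rewrite /= -mulr_suml; exact: sum_delta.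
Qed.

Lemma sum_pair_delta2 (I J : finType) (h : I * J -> R) b :
  \sum_q h q * (b == q.2)%:R = \sum_i h (i, b).
Proof. by rewrite sum_pair; apply: eq_bigr => i _ /=; rewrite sum_delta. Qed.

Lemma sum_trip_delta (I J K : finType) (h : I * J * K -> R) a b :
  \sum_q h q * ((a, b) == (q.1.1, q.2))%:R = \sum_j h (a, j, b).
Proof.
rewrite sum_pair.
under eq_bigr => p _.
  under eq_bigr => k _ do rewrite /= xpair_eqE natr_andb mulrA.
  rewrite sum_delta.
  over.
by rewrite /= (sum_pair_delta1 (fun p => h (p, b))).
Qed.

Lemma fm_sym i j : fm T i j = fm T j i.
Proof. by case: Hok => _ [H _]; case: (H i j). Qed.
Lemma fd_sym i j : fd T i j = fd T j i.
Proof. by case: Hok => _ [H _]; case: (H i j). Qed.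
Lemma adj_sym i j : adj T i j = adj T j i.
Proof. by rewrite /adj fm_sym. Qed.
Lemma harm_sym (u : 'I_N -> R) i j : harm T u i j = harm T u j i.
Proof.
have E : vol T j * u i + vol T i * u j = vol T i * u j + vol T j * u i by rewrite addrC.
by rewrite /harm E; congr (_ / _); ring.
Qed.
Lemma aw_sym l i j : aw l i j = aw l j i.
Proof. by rewrite /aw adj_sym fm_sym fd_sym harm_sym. Qed.
Lemma bw_sym l i j : bw l i j = bw l j i.
Proof. by rewrite /bw adj_sym fm_sym fd_sym. Qed.
Lemma tw_sym i j : tw i j = tw j i.
Proof. by rewrite /tw /tau adj_sym fm_sym fd_sym. Qed.

Lemma Gr_mu x l0 i0 : Gr x (ix (inl (l0, i0))) =
  vol T i0 / dt * expR (mu x l0 i0 - z l0 * ps x i0)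
  - (vol T i0 * cn l0 i0 / dt + eps * beta l0 i0)
  - eps * \sum_j aw l0 i0 j * (mu x l0 j - mu x l0 i0).
Proof.
rewrite Gr_split /=.
under eq_bigr do rewrite !ind_ix /= mulr0n mulr0 subr0.
rewrite sum_delta /dFq dotvBZ !dotv_ind -/(mu x l0 i0) -/(ps x i0).
under eq_bigr do rewrite !ind_ix /=.
rewrite sum_delta.
under eq_bigr do rewrite !ind_ix /= mulrBr.
rewrite sumrB sum_trip_delta sum_pair_delta1.
under eq_bigr do rewrite !ind_ix /= mulr0n subr0 mulr0.
rewrite big1_eq.
under eq_bigr do rewrite !ind_ix /= mulr0n mulr0.
rewrite big1_eq /= ?(mulr0, addr0, mul0r, add0r).
congr (_ + _).
rewrite -sumrB mulr_sumr -sumrN; apply: eq_bigr => j _.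
rewrite !dotvB !dotv_ind (aw_sym l0 j i0) /mu; by field.
Qed.

Lemma Gr_ps x i0 : Gr x (ix (inr i0)) =
  - \sum_l z l * (vol T i0 / dt * expR (mu x l i0 - z l * ps x i0))
  - eps ^+ 2 / dt * \sum_j tw i0 j * (ps x j - ps x i0)
  + eps ^+ 2 / dt * Wd i0 * ps x i0
  - (eps ^+ 2 / dt * Gd i0 + (neu i0 + vol T i0 * rhof i0) / dt).
Proof.
rewrite Gr_split /=.
under eq_bigr do rewrite !ind_ix /= mulr0n sub0r mulrN mulrA.
rewrite sumrN sum_pair_delta2.
under eq_bigr do rewrite !ind_ix /= mulr0n mulr0.
rewrite big1_eq.
under eq_bigr do rewrite !ind_ix /= mulr0n subr0 mulr0.
rewrite big1_eq.
under eq_bigr do rewrite !ind_ix /= mulrBr.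
rewrite sumrB sum_pair_delta1 sum_pair_delta2.
under eq_bigr do rewrite !ind_ix /=.
rewrite sum_delta /= ?(mulr0, addr0, mul0r, add0r) !dotv_ind -/(ps x i0).
have E1 : \sum_(i < M) dFq (vol T i0 / dt) 0 0
       (dotv (fun k : 'I_nV => ind (inl (i, i0)) k - z i * ind (inr i0) k) x) * z i
   = \sum_l z l * (vol T i0 / dt * expR (mu x l i0 - z l * ps x i0)).
  apply: eq_bigr => l _; rewrite /dFq dotvBZ !dotv_ind /mu /ps; ring.
have E2 : \sum_(i < N) 2 * (eps ^+ 2 / (4 * dt) * tw i i0) *
      dotv (fun k : 'I_nV => ind (inr i0) k - ind (inr i) k) x -
   \sum_(j < N) 2 * (eps ^+ 2 / (4 * dt) * tw i0 j) *
      dotv (fun k : 'I_nV => ind (inr j) k - ind (inr i0) k) x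
   = - (eps ^+ 2 / dt * \sum_j tw i0 j * (ps x j - ps x i0)).
  rewrite -sumrB mulr_sumr -sumrN; apply: eq_bigr => j _.
  rewrite !dotvB !dotv_ind (tw_sym j i0) /ps; field; exact: dtne.
have E3 : 2 * (eps ^+ 2 / dt * Wd i0 / 2) = eps ^+ 2 / dt * Wd i0 by field; rewrite ?dtne.
rewrite E1 E2 E3; ring.
Qed.

Definition cof (x : 'rV[R]_nV) l i := expR (mu x l i - z l * ps x i).

Lemma res_of_Gr x : (forall k, Gr x k = 0) ->
  (forall l i, res1 (cof x) (ps x) l i = 0) /\ (forall i, res2 (cof x) (ps x) i = 0).
Proof.
move=> HG; split.
  move=> l i; have := HG (ix (inl (l, i))); rewrite Gr_mu => <-.
  rewrite /res1 /cof !expRK.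
  have -> : \sum_j aw l i j * (ln (expR (mu x l j - z l * ps x j)) + z l * ps x j -
      (mu x l i - z l * ps x i + z l * ps x i)) = \sum_j aw l i j * (mu x l j - mu x l i).
    by apply: eq_bigr => j _; rewrite expRK; congr (_ * _); ring.
  by field; rewrite ?dtne.
move=> i; have := HG (ix (inr i)); rewrite Gr_ps => H.
have E : \sum_l z l * (vol T i / dt * expR (mu x l i - z l * ps x i))
    = vol T i / dt * \sum_l z l * cof x l i.
  by rewrite mulr_sumr; apply: eq_bigr => l _; rewrite /cof; ring.
move: H; rewrite E /res2 => H.
have -> : - eps ^+ 2 * (\sum_j tw i j * (ps x j - ps x i) + Gd i - Wd i * ps x i) - neu i
   - vol T i * (\sum_(l < M) z l * cof x l i + rhof i)
   = dt * (- (vol T i / dt * \sum_l z l * cof x l i) -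
       eps ^+ 2 / dt * \sum_j tw i j * (ps x j - ps x i) +
       eps ^+ 2 / dt * Wd i * ps x i -
       (eps ^+ 2 / dt * Gd i + (neu i + vol T i * rhof i) / dt)).
  by field; rewrite ?dtne.
by rewrite H mulr0.
Qed.

Lemma cof_pos x l i : 0 < cof x l i.
Proof. exact: expR_gt0. Qed.

Definition Phi x := PhiA (fun p => Fq (cA p) (cB p) (cC p)) (fun=> 0) alpha x.
Definition yv x l i := mu x l i - z l * ps x i.
Definition E1 x := \sum_(q : 'I_M * 'I_N) vol T q.2 / dt *
   (expR (yv x q.1 q.2) - cn q.1 q.2 * yv x q.1 q.2).
Definition LQ x := \sum_(q : 'I_M * 'I_N) (- (eps * beta q.1 q.2) * mu x q.1 q.2)
  + \sum_(q : 'I_M * 'I_N * 'I_N) eps / 4 * aw q.1.1 q.1.2 q.2 *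
      (mu x q.1.1 q.2 - mu x q.1.1 q.1.2) ^+ 2.
Definition lam i := - (eps ^+ 2 / dt * Gd i + (neu i + vol T i * rhof i) / dt)
  - \sum_l vol T i * cn l i * z l / dt.
Definition Qps x := \sum_(q : 'I_N * 'I_N) eps ^+ 2 / (4 * dt) * tw q.1 q.2 *
      (ps x q.2 - ps x q.1) ^+ 2
  + \sum_i eps ^+ 2 / dt * Wd i / 2 * ps x i ^+ 2.
Definition Ps x := Qps x + \sum_i lam i * ps x i.

Lemma PhiE x : Phi x = E1 x + LQ x + Ps x.
Proof.
rewrite /Phi /PhiA !big_sumType /=.
under eq_bigr do rewrite /Fq add0r dotvBZ !dotv_ind ?(mul0r, addr0).
under [X in _ + X + _]eq_bigr do rewrite /Fq add0r !dotv_ind ?(mul0r, add0r).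
under [X in _ + (X + _)]eq_bigr do rewrite /Fq add0r dotvB !dotv_ind ?(mul0r, add0r, addr0).
under [X in _ + (_ + (X + _))]eq_bigr do rewrite /Fq add0r dotvB !dotv_ind ?(mul0r, add0r, addr0).
under [X in _ + (_ + (_ + X))]eq_bigr do rewrite /Fq add0r !dotv_ind ?(mul0r, add0r, addr0).
rewrite /E1 /LQ /Ps /Qps /lam.
set A1 := \sum_(q : 'I_M * 'I_N) vol T q.2 / dt * expR (x ord0 (ix (inl q)) - z q.1 * x ord0 (ix (inr q.2))).
set B1 := \sum_(q : 'I_M * 'I_N) vol T q.2 * cn q.1 q.2 / dt * x ord0 (ix (inl q)).
set C1 := \sum_(q : 'I_M * 'I_N) vol T q.2 * cn q.1 q.2 * z q.1 / dt * x ord0 (ix (inr q.2)).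
set D1 := \sum_(q : 'I_M * 'I_N) (- (eps * beta q.1 q.2) * mu x q.1 q.2).
set G1 := \sum_(i < N) - (eps ^+ 2 / dt * Gd i + (neu i + vol T i * rhof i) / dt) * ps x i.
have e1 : \sum_(q : 'I_M * 'I_N) vol T q.2 / dt *
   (expR (yv x q.1 q.2) - cn q.1 q.2 * yv x q.1 q.2) = A1 - B1 + C1.
  rewrite /A1 /B1 /C1 -sumrB -big_split /=; apply: eq_bigr => -[l i] _.
  rewrite /yv /mu /ps /=; ring.
have e2 : \sum_(i : 'I_M * 'I_N) - (vol T i.2 * cn i.1 i.2 / dt + eps * beta i.1 i.2) *
     x ord0 (ix (inl i)) = - B1 + D1.
  rewrite /B1 /D1 -sumrN -big_split /=; apply: eq_bigr => -[l i] _.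
  rewrite /mu /=; ring.
have e3 : \sum_i (- (eps ^+ 2 / dt * Gd i + (neu i + vol T i * rhof i) / dt) -
      \sum_l vol T i * cn l i * z l / dt) * ps x i = G1 - C1.
  rewrite /G1 /C1 sum_pair exchange_big /= -sumrB; apply: eq_bigr => i _.
  rewrite mulrBl mulr_suml; congr (_ - _); apply: eq_bigr => l _; rewrite /ps; ring.
have e4 : \sum_(i : 'I_M * 'I_N * 'I_N) eps / 4 * aw i.1.1 i.1.2 i.2 *
      ((x ord0 (ix (inl (i.1.1, i.2))) - x ord0 (ix (inl i.1))) *
       (x ord0 (ix (inl (i.1.1, i.2))) - x ord0 (ix (inl i.1))))
  = \sum_(q : 'I_M * 'I_N * 'I_N) eps / 4 * aw q.1.1 q.1.2 q.2 *
      (mu x q.1.1 q.2 - mu x q.1.1 q.1.2) ^+ 2.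
  by apply: eq_bigr => -[[l i] j] _; rewrite /mu /= expr2.
have e5 : \sum_(i : 'I_N * 'I_N) eps ^+ 2 / (4 * dt) * tw i.1 i.2 *
       ((x ord0 (ix (inr i.2)) - x ord0 (ix (inr i.1))) *
        (x ord0 (ix (inr i.2)) - x ord0 (ix (inr i.1))))
  = \sum_(q : 'I_N * 'I_N) eps ^+ 2 / (4 * dt) * tw q.1 q.2 *
      (ps x q.2 - ps x q.1) ^+ 2.
  by apply: eq_bigr => -[i j] _; rewrite /ps /= expr2.
have e6 : \sum_(i < N) (eps ^+ 2 / dt * Wd i / 2 * (x ord0 (ix (inr i)) * x ord0 (ix (inr i))) +
        - (eps ^+ 2 / dt * Gd i + (neu i + vol T i * rhof i) / dt) * x ord0 (ix (inr i)))
  = \sum_i eps ^+ 2 / dt * Wd i / 2 * ps x i ^+ 2 + G1.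
  by rewrite /G1 big_split /=; congr (_ + _); apply: eq_bigr => i _; rewrite /ps expr2.
rewrite e1 e2 e3 e4 e5 e6; ring.
Qed.

Hypothesis Heps : 0 < eps.
Hypothesis Hconn : mesh_connected T.
Hypothesis Hdirf : has_dirichlet_face T.

Lemma fm_ge0 i j : 0 <= fm T i j.
Proof. by case: Hok => _ [_ [H _]]. Qed.
Lemma fd_pos i j : adj T i j -> 0 < fd T i j.
Proof. by case: Hok => _ [_ [_ [_ [H _]]]]; apply: H. Qed.
Lemma dir_pos i s : s \in dirF T i -> 0 < s.1.1 /\ 0 < s.1.2.
Proof. by case: Hok => _ [_ [_ [_ [_ [H _]]]]]; apply: H. Qed.

Lemma harm_pos (u : 'I_N -> R) i j : (forall k, 0 < u k) -> 0 < harm T u i j.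
Proof.
move=> Hu; rewrite /harm; apply: divr_gt0.
  by rewrite !mulr_gt0 ?addr_gt0.
by rewrite addr_gt0 ?mulr_gt0.
Qed.

Lemma aw_pos l i j : adj T i j -> 0 < aw l i j.
Proof.
move=> h; rewrite /aw h mulr_gt0 ?harm_pos // divr_gt0 ?mulr_gt0 ?fd_pos //.
Qed.
Lemma aw_ge0 l i j : 0 <= aw l i j.
Proof.
case E: (adj T i j); first exact: ltW (aw_pos l E).
by rewrite /aw E.
Qed.
Lemma tw_ge0 i j : 0 <= tw i j.
Proof. by rewrite /tw /tau; case: ifP => // h; rewrite divr_ge0 ?fm_ge0 // ltW ?fd_pos. Qed.
Lemma tw_pos i j : adj T i j -> 0 < tw i j.
Proof. by move=> h; rewrite /tw /tau h divr_gt0 ?fd_pos. Qed.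

Lemma beta_sum l : \sum_i beta l i = 0.
Proof. by rewrite /beta; apply: antisym_sum => i j; exact: bw_sym. Qed.

Lemma Nvert : exists i0 : 'I_N, dirF T i0 != [::].
Proof. exact: Hdirf. Qed.

Lemma LQ_lb : exists K1, forall x, - K1 <= LQ x.
Proof.
have [i0 _] := Nvert.
have HL : forall l, exists C, forall x, - C <= \sum_i (- (eps * beta l i) * mu x l i)
    + \sum_i \sum_j eps / 4 * aw l i j * (mu x l j - mu x l i) ^+ 2.
  move=> l.
  have HP : forall i, exists P, 0 < P /\ forall y : 'I_N -> R, (y i - y i0) ^+ 2 <=
      P * \sum_a \sum_b (eps / 4 * aw l a b) * (y b - y a) ^+ 2.
    move=> i; apply: (@poincare _ _ (adj T)).
    - by move=> a b; rewrite mulr_ge0 ?aw_ge0 // divr_ge0 // ltW.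
    - by move=> a b h; rewrite mulr_gt0 ?aw_pos // divr_gt0.
    - exact: Hconn.
  have [P HP'] := fin_all_exists HP.
  have [C HC] := @absorb _ _ (fun i => eps * beta l i) P (fun i => (HP' i).1).
  exists C => x.
  set Q := \sum_i \sum_j _.
  have Q0 : 0 <= Q.
    apply: sumr_ge0 => a _; apply: sumr_ge0 => b _.
    by rewrite mulr_ge0 ?sqr_ge0 // mulr_ge0 ?aw_ge0 // divr_ge0 // ltW.
  have H1 := HC (fun i => mu x l i - mu x l i0) Q Q0 (fun i => (HP' i).2 (fun k => mu x l k)).
  have H2 : \sum_i eps * beta l i * (mu x l i - mu x l i0)
      = \sum_i eps * beta l i * mu x l i.
    under eq_bigr do rewrite mulrBr.
    by rewrite sumrB -mulr_suml -mulr_sumr beta_sum mulr0 mul0r subr0.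
  have H2' : \sum_i (- (eps * beta l i) * mu x l i) = - \sum_i eps * beta l i * mu x l i.
    by rewrite -sumrN; apply: eq_bigr => i _; rewrite mulNr.
  have H3 : `|\sum_i eps * beta l i * (mu x l i - mu x l i0)| <=
      \sum_i `|eps * beta l i * (mu x l i - mu x l i0)| by apply: ler_norm_sum.
  have H4 := ler_norm (\sum_i eps * beta l i * (mu x l i - mu x l i0)).
  rewrite H2'; rewrite H2 in H3 H4; lra.
have [Cf HCf] := fin_all_exists HL.
exists (\sum_l Cf l) => x.
have E : LQ x = \sum_l (\sum_i (- (eps * beta l i) * mu x l i)
    + \sum_i \sum_j eps / 4 * aw l i j * (mu x l j - mu x l i) ^+ 2).
  rewrite /LQ big_split /=; congr (_ + _); first by rewrite sum_pair.
  by rewrite sum_pair sum_pair.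
rewrite E -sumrN; apply: ler_sum => l _; exact: HCf.
Qed.

Lemma Wd_ge0 i : 0 <= Wd i.
Proof.
rewrite /Wd big_seq; apply: sumr_ge0 => s hs.
by have [h1 h2] := dir_pos hs; rewrite divr_ge0 // ltW.
Qed.

Lemma Wd_pos i : dirF T i != [::] -> 0 < Wd i.
Proof.
rewrite /Wd; case E: (dirF T i) => [|s l] // _.
rewrite big_cons.
have [h1 h2] : 0 < s.1.1 /\ 0 < s.1.2 by apply: (@dir_pos i); rewrite E mem_head.
apply: ltr_pwDl; first by rewrite divr_gt0.
rewrite big_seq; apply: sumr_ge0 => t ht.
have [h3 h4] : 0 < t.1.1 /\ 0 < t.1.2 by apply: (@dir_pos i); rewrite E in_cons ht orbT.
by rewrite divr_ge0 // ltW.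
Qed.

Lemma Qps_split x : Qps x =
  \sum_a \sum_b (eps ^+ 2 / (4 * dt) * tw a b) * (ps x b - ps x a) ^+ 2
  + \sum_i eps ^+ 2 / dt * Wd i / 2 * ps x i ^+ 2.
Proof. by rewrite /Qps sum_pair. Qed.

Lemma W4_ge0 a b : 0 <= eps ^+ 2 / (4 * dt) * tw a b.
Proof. by rewrite mulr_ge0 ?tw_ge0 // divr_ge0 ?sqr_ge0 // mulr_ge0 // ltW. Qed.

Lemma Wd2_ge0 i : 0 <= eps ^+ 2 / dt * Wd i / 2.
Proof. by rewrite divr_ge0 // mulr_ge0 ?Wd_ge0 // divr_ge0 ?sqr_ge0 // ltW. Qed.

Lemma Qps_ge0 x : 0 <= Qps x.
Proof.
rewrite Qps_split addr_ge0 //.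
  apply: sumr_ge0 => a _; apply: sumr_ge0 => b _; by rewrite mulr_ge0 ?W4_ge0 ?sqr_ge0.
by apply: sumr_ge0 => i _; rewrite mulr_ge0 ?Wd2_ge0 ?sqr_ge0.
Qed.

Lemma Qps_poinc i : exists P, 0 < P /\ forall x, ps x i ^+ 2 <= P * Qps x.
Proof.
have [i0 hi0] := Nvert.
have [P' [P'0 HP']] := @poincare _ _ (adj T) (fun a b => eps ^+ 2 / (4 * dt) * tw a b)
  W4_ge0 (fun a b h => mulr_gt0 (divr_gt0 (exprn_gt0 2 Heps) (mulr_gt0 (ltr0n _ 4) Hdt)) (tw_pos h))
  i0 i (Hconn i0 i).
set ka := eps ^+ 2 / dt * Wd i0 / 2.
have ka0 : 0 < ka by rewrite /ka divr_gt0 // mulr_gt0 ?Wd_pos // divr_gt0 // exprn_gt0.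
exists (2 * P' + 2 / ka); split.
  by rewrite addr_gt0 ?mulr_gt0 ?invr_gt0.
move=> x; rewrite Qps_split.
set Qe := \sum_a _; set Qd := \sum_i _.
have Qe0 : 0 <= Qe.
  apply: sumr_ge0 => a _; apply: sumr_ge0 => b _; by rewrite mulr_ge0 ?W4_ge0 ?sqr_ge0.
have Qd0 : 0 <= Qd by apply: sumr_ge0 => j _; rewrite mulr_ge0 ?Wd2_ge0 ?sqr_ge0.
have h1 : (ps x i - ps x i0) ^+ 2 <= P' * Qe := HP' (fun k => ps x k).
have h2 : ka * ps x i0 ^+ 2 <= Qd.
  by apply: (@le_sum1 _ _ (fun j => eps ^+ 2 / dt * Wd j / 2 * ps x j ^+ 2)) => j;
     rewrite mulr_ge0 ?Wd2_ge0 ?sqr_ge0.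
have h3 : ps x i0 ^+ 2 <= 1 / ka * Qd by rewrite mul1r ler_pdivlMl.
have h4 := sq_add_le (ps x i - ps x i0) (ps x i0).
rewrite subrK in h4.
have h5 : P' * Qe <= P' * (Qe + Qd) by apply: ler_wpM2l; [exact: ltW | lra].
have h6 : 1 / ka * Qd <= 1 / ka * (Qe + Qd).
  by apply: ler_wpM2l; [rewrite divr_ge0 // ltW | lra].
have -> : (2 * P' + 2 / ka) * (Qe + Qd) = 2 * (P' * (Qe + Qd)) + 2 * (1 / ka * (Qe + Qd)).
  by rewrite /=; field; rewrite gt_eqF.
lra.
Qed.

Lemma Ps_lb : exists K2 (P : 'I_N -> R), (forall i, 0 < P i) /\
  forall x i, ps x i ^+ 2 / P i - K2 <= Ps x.
Proof.
have [P HP] := fin_all_exists Qps_poinc.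
have P2 : forall i, 0 < 2 * P i by move=> i; rewrite mulr_gt0 // (HP i).1.
have [C HC] := @absorb _ _ lam (fun i => 2 * P i) P2.
exists C, (fun i => 2 * P i); split => // x i.
have Q0 := Qps_ge0 x.
have H1 : \sum_j `|lam j * ps x j| <= Qps x / 2 + C.
  apply: (HC (fun j => ps x j)); first by rewrite divr_ge0.
  move=> j; have := (HP j).2 x.
  suff -> : 2 * P j * (Qps x / 2) = P j * Qps x by [].
  by field.
have H2 : `|\sum_j lam j * ps x j| <= \sum_j `|lam j * ps x j| by apply: ler_norm_sum.
have H3 : - `|\sum_j lam j * ps x j| <= \sum_j lam j * ps x j.
  by rewrite lerNl -normrN ler_norm.
have H4 : ps x i ^+ 2 / (2 * P i) <= Qps x / 2.
  rewrite ler_pdivrMr //.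
  have -> : Qps x / 2 * (2 * P i) = P i * Qps x by field.
  exact: (HP i).2.
rewrite /Ps; lra.
Qed.

Lemma E1_term x (q : 'I_M * 'I_N) :
  vol T q.2 / dt * (cn q.1 q.2 / (cn q.1 q.2 + 1) * `|yv x q.1 q.2| - (cn q.1 q.2 + 1) ^+ 2 / 2)
  <= vol T q.2 / dt * (expR (yv x q.1 q.2) - cn q.1 q.2 * yv x q.1 q.2).
Proof.
by rewrite ler_wpM2l ?exp_lin_lb // divr_ge0 // ltW.
Qed.

Lemma abs_le_sq (a : R) : `|a| <= 1 + a ^+ 2.
Proof.
have h : `|a| ^+ 2 = a ^+ 2 by rewrite real_normK // num_real.
rewrite -h; have := sqr_ge0 (`|a| - 1); rewrite sqrrB; nra.
Qed.

Lemma lin_solve (a m u K S : R) : 0 < a -> 0 < m -> a * (m * u - K) <= S ->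
  u <= (S / a + K) / m.
Proof.
move=> a0 m0 h.
have h1 : m * u - K <= S / a by rewrite ler_pdivlMr // mulrC.
rewrite ler_pdivlMr //; lra.
Qed.

Lemma coerc k : exists Bd, forall x, Phi x <= Phi 0 -> `|x ord0 k| <= Bd.
Proof.
have [K1 HK1] := LQ_lb.
have [K2 [P [P0 HP]]] := Ps_lb.
have [i0 _] := Nvert.
set g := fun q : 'I_M * 'I_N => - (vol T q.2 / dt * ((cn q.1 q.2 + 1) ^+ 2 / 2)).
have Hg : forall x q, g q <= vol T q.2 / dt *
    (expR (yv x q.1 q.2) - cn q.1 q.2 * yv x q.1 q.2).
  move=> x q; apply: le_trans (E1_term x q); rewrite /g mulrBr.
  have : 0 <= vol T q.2 / dt * (cn q.1 q.2 / (cn q.1 q.2 + 1) * `|yv x q.1 q.2|).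
    apply: mulr_ge0; first by rewrite divr_ge0 // ltW.
    apply: mulr_ge0; last exact: normr_ge0.
    have := Hcn q.1 q.2 => hc.
    by apply: divr_ge0; [exact: ltW | apply: addr_ge0; [exact: ltW | exact: ler01]].
  lra.
set K3 := \sum_q `|g q|.
have E1lb : forall x, - K3 <= E1 x.
  move=> x; rewrite /E1 /K3 -sumrN; apply: ler_sum => q _.
  apply: le_trans (Hg x q); rewrite lerNl -normrN; exact: ler_norm.
set S := Phi 0 + K1 + K2 + K3.
have Hps : forall x i, Phi x <= Phi 0 -> `|ps x i| <= 1 + P i * S.
  move=> x i; rewrite PhiE => h.
  have h1 := HK1 x; have h2 := HP x i; have h3 := E1lb x.
  have h4 : ps x i ^+ 2 / P i <= S by rewrite /S; lra.
  have h5 : ps x i ^+ 2 <= P i * S by rewrite -ler_pdivrMl // mulrC.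
  have := abs_le_sq (ps x i); lra.
have Hy : forall x l i, Phi x <= Phi 0 -> `|yv x l i| <=
    (S / (vol T i / dt) + (cn l i + 1) ^+ 2 / 2) / (cn l i / (cn l i + 1)).
  move=> x l i; rewrite PhiE => h.
  have h1 := HK1 x; have h2 := HP x i0.
  have h0 : 0 <= ps x i0 ^+ 2 / P i0 by rewrite divr_ge0 ?sqr_ge0 // ltW.
  have hE : E1 x <= Phi 0 + K1 + K2 by lra.
  have := term_le (l, i) hE (Hg x).
  rewrite -/K3 -/S => h3; have h4 := le_trans (E1_term x (l, i)) h3.
  apply: lin_solve h4; first by rewrite divr_gt0.
  by rewrite divr_gt0 // addr_gt0.
have kv : k = ix (enum_val k) by rewrite /ix enum_valK.
case E: (enum_val k) kv => [[l i]|i] ->.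
  exists ((S / (vol T i / dt) + (cn l i + 1) ^+ 2 / 2) / (cn l i / (cn l i + 1))
          + `|z l| * (1 + P i * S)) => x h.
  have -> : x ord0 (ix (inl (l, i))) = yv x l i + z l * ps x i by rewrite /yv /mu; ring.
  apply: (le_trans (ler_normD _ _)); rewrite normrM.
  apply: lerD; first exact: Hy.
  by apply: ler_wpM2l; [exact: normr_ge0 | exact: Hps].
by exists (1 + P i * S) => x h; exact: Hps.
Qed.

Lemma exist_sol : exists cp : ('I_M -> 'I_N -> R) * ('I_N -> R),
  (forall l i, 0 < cp.1 l i) /\ eq_i T eps dt nu z cn cp.1 cp.2 Tn /\
  eq_ii T eps z rhof cp.1 cp.2.
Proof.
have [x Hx] := @PhiQ_exists_min R PP nV cA cB cC alpha coerc.
have [H1 H2] := res_of_Gr Hx.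
exists (cof x, ps x); split; first exact: cof_pos.
by split; [apply/eq_i_res | apply/eq_ii_res].
Qed.

Lemma quad_form (I : finType) (w : I -> I -> R) (y : I -> R) :
  (forall i j, w i j = w j i) ->
  \sum_i \sum_j w i j * (y j - y i) * y i = - (\sum_i \sum_j w i j * (y j - y i) ^+ 2) / 2.
Proof.
move=> Hw; set S := \sum_i _.
have E : S = - \sum_i \sum_j w i j * (y j - y i) * y j.
  rewrite /S exchange_big /= -sumrN; apply: eq_bigr => i _.
  rewrite -sumrN; apply: eq_bigr => j _; rewrite Hw; ring.
have F : S + S = - \sum_i \sum_j w i j * (y j - y i) ^+ 2.
  rewrite {2}E /S -sumrB -sumrN; apply: eq_bigr => i _.
  rewrite -sumrB -sumrN; apply: eq_bigr => j _; ring.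
lra.
Qed.

Lemma ln_prod (a b : R) : 0 < a -> 0 < b ->
  0 <= (a - b) * (ln a - ln b) /\ ((a - b) * (ln a - ln b) = 0 -> a = b).
Proof.
move=> a0 b0.
have pa : a \in Num.pos by rewrite posrE.
have pb : b \in Num.pos by rewrite posrE.
case: (ltgtP a b) => h.
- have h1 : ln a < ln b by rewrite ltr_ln.
  split; first nra. move=> h2; nra.
- have h1 : ln b < ln a by rewrite ltr_ln.
  split; first nra. move=> h2; nra.
- by subst; rewrite subrr mul0r.
Qed.

Lemma connect_const (I : finType) (e : rel I) (f : I -> R) :
  (forall a b, e a b -> f b = f a) -> forall a b, connect e a b -> f b = f a.
Proof.
move=> He a b /connectP [p pth ->] {b}.
elim: p a pth => [|c p IH] a //= /andP [eac pc].
by rewrite (IH c pc) (He a c eac).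
Qed.

Lemma uniq_sol c psi c' psi' :
  (forall l i, 0 < c l i) -> (forall l i, 0 < c' l i) ->
  (forall l i, res1 c psi l i = 0) -> (forall i, res2 c psi i = 0) ->
  (forall l i, res1 c' psi' l i = 0) -> (forall i, res2 c' psi' i = 0) ->
  c = c' /\ psi = psi'.
Proof.
move=> cp cp' R1 R2 R1' R2'.
set dm := fun l i => (ln (c l i) + z l * psi i) - (ln (c' l i) + z l * psi' i).
set dp := fun i => psi i - psi' i.
have key1 : forall l i, vol T i * (c l i - c' l i) =
    dt * eps * \sum_j aw l i j * (dm l j - dm l i).
  move=> l i; have h := R1 l i; have h' := R1' l i; move: h h'; rewrite /res1.
  set A := \sum_j aw l i j * (ln (c l j) + z l * psi j - (ln (c l i) + z l * psi i)).
  set A' := \sum_j aw l i j * (ln (c' l j) + z l * psi' j - (ln (c' l i) + z l * psi' i)).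
  move=> h h'.
  have E : \sum_j aw l i j * (dm l j - dm l i) = A - A'.
    by rewrite /A /A' -sumrB; apply: eq_bigr => j _; rewrite /dm; ring.
  rewrite E.
  have -> : vol T i * (c l i - c' l i) =
    dt * ((vol T i * (c l i - cn l i) / dt - eps * A - eps * beta l i) -
          (vol T i * (c' l i - cn l i) / dt - eps * A' - eps * beta l i)) + dt * eps * (A - A').
    by field; rewrite dtne.
  by rewrite h h' subrr mulr0 add0r.
have Lneg : forall l, \sum_i vol T i * (c l i - c' l i) * dm l i <= 0.
  move=> l.
  have E : \sum_i vol T i * (c l i - c' l i) * dm l i =
      dt * eps * \sum_i \sum_j aw l i j * (dm l j - dm l i) * dm l i.
    rewrite mulr_sumr; apply: eq_bigr => i _; rewrite key1 -mulrA mulr_suml.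
    by congr (_ * _); apply: eq_bigr => j _.
  rewrite E (@quad_form _ (aw l) (dm l) (aw_sym l)).
  have Q0 : 0 <= \sum_i \sum_j aw l i j * (dm l j - dm l i) ^+ 2.
    by apply: sumr_ge0 => a _; apply: sumr_ge0 => b _; rewrite mulr_ge0 ?aw_ge0 ?sqr_ge0.
  have de : 0 < dt * eps by rewrite mulr_gt0.
  rewrite pmulr_rle0 //; lra.
have key2 : forall i, vol T i * \sum_l z l * (c l i - c' l i) =
    - eps ^+ 2 * (\sum_j tw i j * (dp j - dp i) - Wd i * dp i).
  move=> i; have h := R2 i; have h' := R2' i; move: h h'; rewrite /res2.
  set Sp := \sum_j tw i j * (psi j - psi i).
  set Sp' := \sum_j tw i j * (psi' j - psi' i).
  set Zc := \sum_(l < M) z l * c l i.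
  set Zc' := \sum_(l < M) z l * c' l i.
  move=> h h'.
  have E1 : \sum_l z l * (c l i - c' l i) = Zc - Zc'.
    by rewrite /Zc /Zc' -sumrB; apply: eq_bigr => l _; ring.
  have E2 : \sum_j tw i j * (dp j - dp i) = Sp - Sp'.
    by rewrite /Sp /Sp' -sumrB; apply: eq_bigr => j _; rewrite /dp; ring.
  rewrite E1 E2; apply/eqP; rewrite -subr_eq0.
  have -> : vol T i * (Zc - Zc') - - eps ^+ 2 * (Sp - Sp' - Wd i * dp i) =
     - ((- eps ^+ 2 * (Sp + Gd i - Wd i * psi i) - neu i - vol T i * (Zc + rhof i)) -
        (- eps ^+ 2 * (Sp' + Gd i - Wd i * psi' i) - neu i - vol T i * (Zc' + rhof i))).
    by rewrite /dp; ring.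
  by rewrite h h' subrr oppr0.
set Q := \sum_i \sum_j tw i j * (dp j - dp i) ^+ 2.
have Q0 : 0 <= Q.
  by apply: sumr_ge0 => a _; apply: sumr_ge0 => b _; rewrite mulr_ge0 ?tw_ge0 ?sqr_ge0.
set D := \sum_i Wd i * dp i ^+ 2.
have D0 : 0 <= D by apply: sumr_ge0 => i _; rewrite mulr_ge0 ?Wd_ge0 ?sqr_ge0.
have Bid : \sum_l \sum_i vol T i * (c l i - c' l i) * (z l * dp i) =
    eps ^+ 2 / 2 * Q + eps ^+ 2 * D.
  rewrite exchange_big /=.
  have E : forall i, \sum_l vol T i * (c l i - c' l i) * (z l * dp i) =
      dp i * (vol T i * \sum_l z l * (c l i - c' l i)).
    by move=> i; rewrite !mulr_sumr; apply: eq_bigr => l _; ring.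
  under eq_bigr do rewrite E key2.
  have E2 : \sum_i dp i * (- eps ^+ 2 * (\sum_j tw i j * (dp j - dp i) - Wd i * dp i)) =
     - eps ^+ 2 * (\sum_i \sum_j tw i j * (dp j - dp i) * dp i) + eps ^+ 2 * D.
    rewrite /D !mulr_sumr -big_split /=; apply: eq_bigr => i _.
    rewrite -mulr_suml; ring.
  rewrite E2 (@quad_form _ tw dp tw_sym) -/Q; ring.
set L := \sum_l \sum_i vol T i * ((c l i - c' l i) * (ln (c l i) - ln (c' l i))).
have L0 : forall l i, 0 <= vol T i * ((c l i - c' l i) * (ln (c l i) - ln (c' l i))).
  by move=> l i; apply: mulr_ge0; [exact: ltW | exact: (ln_prod (cp l i) (cp' l i)).1].
have Lge : 0 <= L by apply: sumr_ge0 => l _; apply: sumr_ge0 => i _; exact: L0.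
have Tot : L + (eps ^+ 2 / 2 * Q + eps ^+ 2 * D) <= 0.
  rewrite -Bid /L -big_split /=.
  apply: (le_trans (y := \sum_(l < M) (0 : R))); last by rewrite big1.
  apply: ler_sum => l _; apply: le_trans (Lneg l); rewrite -big_split /=.
  rewrite (eq_bigr (fun i => vol T i * (c l i - c' l i) * dm l i)) // => i _; rewrite /dm /dp; ring.
have e2 : 0 < eps ^+ 2 by rewrite exprn_gt0.
have hQ : 0 <= eps ^+ 2 / 2 * Q by rewrite mulr_ge0 // divr_ge0 // ltW.
have hD : 0 <= eps ^+ 2 * D by rewrite mulr_ge0 // ltW.
have L_0 : L = 0 by lra.
have Q_0 : Q = 0.
  have : eps ^+ 2 / 2 * Q = 0 by lra.
  move/eqP; rewrite mulf_eq0 => /orP [/eqP h|/eqP //].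
  have : 0 < eps ^+ 2 / 2 by rewrite divr_gt0.
  by rewrite h ltxx.
have D_0 : D = 0.
  have : eps ^+ 2 * D = 0 by lra.
  by move/eqP; rewrite mulf_eq0 (gt_eqF e2) /= => /eqP.
have cc : c = c'.
  have HL := @psumr_eq0P _ _ xpredT
     (fun l => \sum_i vol T i * ((c l i - c' l i) * (ln (c l i) - ln (c' l i))))
     (fun l _ => sumr_ge0 _ (fun i _ => L0 l i)).
  have {HL} HL := HL L_0.
  apply: funext => l; apply: funext => i.
  have Hl := HL l isT.
  have HLi := @psumr_eq0P _ _ xpredT
     (fun i => vol T i * ((c l i - c' l i) * (ln (c l i) - ln (c' l i))))
     (fun i _ => L0 l i).
  have {HLi} HLi := HLi Hl i isT.
  move/eqP: HLi; rewrite mulf_eq0 (negbTE (vne i)) /= => /eqP.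
  exact: (ln_prod (cp l i) (cp' l i)).2.
split => //.
have [i0 hi0] := Nvert.
have D_i := @psumr_eq0P _ _ xpredT (fun i => Wd i * dp i ^+ 2)
     (fun i _ => mulr_ge0 (Wd_ge0 i) (sqr_ge0 (dp i))).
have {D_i} D_i := D_i D_0.
have dp0 : dp i0 = 0.
  have := D_i i0 isT; move/eqP; rewrite mulf_eq0 (gt_eqF (Wd_pos hi0)) /= sqrf_eq0.
  by move/eqP.
have Q_i := @psumr_eq0P _ _ xpredT (fun i => \sum_j tw i j * (dp j - dp i) ^+ 2)
     (fun i _ => sumr_ge0 _ (fun j _ => mulr_ge0 (tw_ge0 i j) (sqr_ge0 (dp j - dp i)))).
have {Q_i} Q_i := Q_i Q_0.
have edge : forall a b, adj T a b -> dp b = dp a.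
  move=> a b hab.
  have Qa := @psumr_eq0P _ _ xpredT (fun j => tw a j * (dp j - dp a) ^+ 2)
     (fun j _ => mulr_ge0 (tw_ge0 a j) (sqr_ge0 (dp j - dp a))).
  have := Qa (Q_i a isT) b isT.
  move/eqP; rewrite mulf_eq0 (gt_eqF (tw_pos hab)) /= sqrf_eq0 subr_eq0.
  by move/eqP.
apply: funext => i; apply/eqP; rewrite -subr_eq0; apply/eqP.
have := @connect_const _ (adj T) dp edge i0 i (Hconn i0 i).
by rewrite dp0 /dp.
Qed.
End Conc.


Section Temp.
Variables (R : realType) (N : nat) (T : mesh R N) (k : R).
Hypothesis Hok : mesh_ok T.
Hypothesis Hk : 0 < k.

Lemma Gvol i : 0 < vol T i.
Proof. by case: Hok. Qed.
Lemma Gvne i : vol T i != 0.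
Proof. by rewrite gt_eqF ?Gvol. Qed.

Definition tw2 i j : R := if adj T i j then tau T i j else 0.
Lemma tw2_ge0 i j : 0 <= tw2 i j.
Proof.
rewrite /tw2 /tau; case: ifP => // h.
case: Hok => _ [_ [H0 [_ [Hfd _]]]].
by rewrite divr_ge0 ?H0 // ltW ?Hfd.
Qed.

Definition Lop (dd X : 'I_N -> R) i := dd i * X i - k / vol T i * \sum_j tw2 i j * (X j - X i).

Lemma minprin (dd X : 'I_N -> R) : (forall i, 0 < dd i) ->
  (forall i, 0 <= Lop dd X i) -> forall i, 0 <= X i.
Proof.
move=> Hd HL i.
case: (@arg_minP _ _ _ i xpredT X isT) => i0 _ Hmin.
have S0 : 0 <= \sum_j tw2 i0 j * (X j - X i0).
  apply: sumr_ge0 => j _; rewrite mulr_ge0 ?tw2_ge0 // subr_ge0; exact: Hmin.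
have kv : 0 <= k / vol T i0 by rewrite divr_ge0 // ltW ?Gvol.
have h := HL i0; rewrite /Lop in h.
have h2 : 0 <= k / vol T i0 * \sum_j tw2 i0 j * (X j - X i0) by rewrite mulr_ge0.
have h3 : 0 <= dd i0 * X i0 by lra.
have h4 : 0 <= X i0 by rewrite -(pmulr_rge0 _ (Hd i0)).
exact: le_trans h4 (Hmin i isT).
Qed.

Lemma minprin_strict (dd X : 'I_N -> R) : (forall i, 0 < dd i) ->
  (forall i, 0 < Lop dd X i) -> forall i, 0 < X i.
Proof.
move=> Hd HL i.
case: (@arg_minP _ _ _ i xpredT X isT) => i0 _ Hmin.
have S0 : 0 <= \sum_j tw2 i0 j * (X j - X i0).
  apply: sumr_ge0 => j _; rewrite mulr_ge0 ?tw2_ge0 // subr_ge0; exact: Hmin.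
have kv : 0 <= k / vol T i0 by rewrite divr_ge0 // ltW ?Gvol.
have h := HL i0; rewrite /Lop in h.
have h2 : 0 <= k / vol T i0 * \sum_j tw2 i0 j * (X j - X i0) by rewrite mulr_ge0.
have h3 : 0 < dd i0 * X i0 by lra.
have h4 : 0 < X i0 by rewrite -(pmulr_rgt0 _ (Hd i0)).
exact: lt_le_trans h4 (Hmin i isT).
Qed.

Lemma Lop_opp dd X i : Lop dd (fun j => - X j) i = - Lop dd X i.
Proof.
rewrite /Lop.
have -> : \sum_j tw2 i j * (- X j - - X i) = - \sum_j tw2 i j * (X j - X i).
  by rewrite -sumrN; apply: eq_bigr => j _; ring.
ring.
Qed.

Lemma Lop_sub dd X Y i : Lop dd (fun j => X j - Y j) i = Lop dd X i - Lop dd Y i.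
Proof.
rewrite /Lop.
have -> : \sum_j tw2 i j * (X j - Y j - (X i - Y i)) =
   \sum_j tw2 i j * (X j - X i) - \sum_j tw2 i j * (Y j - Y i).
  by rewrite -sumrB; apply: eq_bigr => j _; ring.
ring.
Qed.

Lemma Lop_inj dd X Y : (forall i, 0 < dd i) ->
  (forall i, Lop dd X i = Lop dd Y i) -> X = Y.
Proof.
move=> Hd H; apply: funext => i.
have H0 : forall j, Lop dd (fun j => X j - Y j) j = 0 by move=> j; rewrite Lop_sub H subrr.
have h1 : 0 <= X i - Y i.
  by apply: (@minprin dd (fun j => X j - Y j) Hd) => j; rewrite H0.
have h2 : 0 <= - (X i - Y i).
  by apply: (@minprin dd (fun j => - (X j - Y j)) Hd) => j; rewrite Lop_opp H0 oppr0.
lra.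
Qed.

Definition Amx (dd : 'I_N -> R) : 'M[R]_N := \matrix_(i, j)
  ((i == j)%:R * (dd i + k / vol T i * \sum_j' tw2 i j') - k / vol T i * tw2 i j).

Lemma Amx_mul dd (X : 'I_N -> R) i : (Amx dd *m \col_j X j) i 0 = Lop dd X i.
Proof.
rewrite !mxE /Lop.
under eq_bigr do rewrite !mxE mulrBl.
rewrite sumrB.
set D := dd i + k / vol T i * \sum_j' tw2 i j'.
have E1 : \sum_i0 (i == i0)%:R * D * X i0 = D * X i.
  rewrite (bigD1 i) //= eqxx mul1r big1 ?addr0 // => j ji.
  have -> : (i == j) = false by apply/negbTE; rewrite eq_sym.
  by rewrite !mul0r.
have E2 : \sum_j tw2 i j * (X j - X i) = \sum_j tw2 i j * X j - (\sum_j tw2 i j) * X i.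
  by rewrite mulr_suml -sumrB; apply: eq_bigr => j _; ring.
have E3 : \sum_i0 k / vol T i * tw2 i i0 * X i0 = k / vol T i * \sum_j tw2 i j * X j.
  by rewrite mulr_sumr; apply: eq_bigr => j _; ring.
rewrite E1 E2 E3 /D; ring.
Qed.

Lemma Amx_unit dd : (forall i, 0 < dd i) -> Amx dd \in unitmx.
Proof.
move=> Hd; rewrite unitmxE unitfE -det_tr; apply/negP => /det0P [v v0 vA].
have Av : Amx dd *m v^T = 0 by rewrite -(trmxK (Amx dd)) -trmx_mul vA trmx0.
have H : forall i, Lop dd (fun j => v 0 j) i = Lop dd (fun=> 0) i.
  move=> i; rewrite -Amx_mul.
  have -> : \col_j v 0 j = v^T by apply/matrixP => a b; rewrite !mxE ord1.
  rewrite Av mxE /Lop big1 => [|j _]; last by rewrite /= subrr mulr0.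
  by rewrite !mulr0 subr0.
have := Lop_inj Hd H => hv.
move/negP: v0; apply; apply/eqP/matrixP => a b; rewrite ord1 mxE.
by have := congr1 (fun f => f b) hv.
Qed.

Lemma Lop_solve dd (r : 'I_N -> R) : (forall i, 0 < dd i) ->
  exists X, forall i, Lop dd X i = r i.
Proof.
move=> Hd; set Xm := invmx (Amx dd) *m \col_j r j.
exists (fun i => Xm i 0) => i.
rewrite -Amx_mul.
have -> : \col_j Xm j 0 = Xm by apply/matrixP => a b; rewrite !mxE ord1.
by rewrite /Xm mulKVmx ?Amx_unit // mxE.
Qed.
End Temp.


Theorem theorem3p2 (R : realType) (N M d : nat) (T : mesh R N)
    (eps k CT dt : R) (nu z : 'I_M -> R) (rhof : 'I_N -> R)
    (cn : 'I_M -> 'I_N -> R) (Tn : 'I_N -> R)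
    (lam : ('I_M -> 'I_N -> R) -> 'I_M -> 'I_N -> 'I_N -> R)
    (uhat : ('I_M -> 'I_N -> R) -> ('I_N -> R) -> ('I_N -> R) ->
            'I_M -> 'I_N -> 'rV[R]_d) :
  mesh_ok T -> mesh_connected T -> has_dirichlet_face T ->
  0 < eps -> 0 < k -> 0 < CT -> (forall l, 0 < nu l) ->
  (forall l i, 0 < cn l i) ->
  (* lambda^l_sigma depends only on sigma = i|j *)
  (forall c l i j, lam c l i j = lam c l j i) ->
  0 < dt ->
  (exists! cp : ('I_M -> 'I_N -> R) * ('I_N -> R),
      (forall l i, 0 < cp.1 l i) /\
      eq_i T eps dt nu z cn cp.1 cp.2 Tn /\ eq_ii T eps z rhof cp.1 cp.2)
  /\
  (forall (cnp : 'I_M -> 'I_N -> R) (psi : 'I_N -> R),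
      (forall l i, 0 < cnp l i) ->
      eq_i T eps dt nu z cn cnp psi Tn -> eq_ii T eps z rhof cnp psi ->
      (forall i, 0 < Tn i) ->
      dt * \big[Num.max/0]_(i < N) `|Pn T eps dt nu z cn cnp psi Tn (lam cnp) i| < CT ->
      (exists! Tnp : 'I_N -> R,
          eq_iii T eps dt k CT nu z cn cnp psi Tn (lam cnp) (uhat cnp psi Tn) Tnp)
      /\
      (forall Tnp : 'I_N -> R,
          eq_iii T eps dt k CT nu z cn cnp psi Tn (lam cnp) (uhat cnp psi Tn) Tnp ->
          forall i, 0 < Tnp i)).
Proof.
move=> Hok Hconn Hdirf Heps Hk HCT Hnu Hcn Hlam Hdt.
have Hvol : forall i, 0 < vol T i by case: Hok.
have dtne : dt != 0 by rewrite gt_eqF.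
split.
  have [cp [Hp [Hi Hii]]] := exist_sol z rhof Tn Hvol Hdt Hok Hnu Hcn Heps Hconn Hdirf.
  exists cp; split => // cp' [Hp' [Hi' Hii']].
  have [e1 e2] := uniq_sol Hvol Hdt Hok Hnu Hcn Heps Hconn Hdirf Hp Hp'
    ((eq_i_res eps nu z cn Tn Hvol Hdt cp.1 cp.2).1 Hi)
    ((eq_ii_res eps z rhof Hvol cp.1 cp.2).1 Hii)
    ((eq_i_res eps nu z cn Tn Hvol Hdt cp'.1 cp'.2).1 Hi')
    ((eq_ii_res eps z rhof Hvol cp'.1 cp'.2).1 Hii').
  by move: e1 e2; case: cp {Hp Hi Hii} => a b; case: cp' {Hp' Hi' Hii'} => a' b' /= -> ->.
move=> cnp psi Hcp Hi Hii HTn Hmax.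
set P := fun i => Pn T eps dt nu z cn cnp psi Tn (lam cnp) i.
set S := fun i => \sum_(l < M) nu l * cnp l i * sqnorm (uhat cnp psi Tn l i).
set dd := fun i => CT / dt - P i.
set src := fun i => CT * Tn i / dt + eps * S i.
have Hdd : forall i, 0 < dd i.
  move=> i; have h1 := le_bigmax 0 (fun i => `|P i|) i.
  have h2 : P i <= `|P i| := ler_norm _.
  have h3 : dt * `|P i| <= dt * \big[Num.max/0]_(i < N) `|P i| by rewrite ler_wpM2l // ltW.
  rewrite /dd subr_gt0 ltr_pdivlMr // mulrC.
  have h4 : dt * P i <= dt * `|P i| by rewrite ler_wpM2l // ltW.
  exact: (le_lt_trans h4 (le_lt_trans h3 Hmax)).
have Hsrc : forall i, 0 < src i.
  move=> i.
  have a : 0 < CT * Tn i / dt by rewrite !mulr_gt0 ?invr_gt0.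
  have b : 0 <= S i.
    apply: sumr_ge0 => l _; apply: mulr_ge0.
      by apply: mulr_ge0; apply: ltW.
    by apply: sumr_ge0 => j _; exact: sqr_ge0.
  have c : 0 <= eps * S i by rewrite mulr_ge0 // ltW.
  rewrite /src; lra.
have Heq : forall X, eq_iii T eps dt k CT nu z cn cnp psi Tn (lam cnp) (uhat cnp psi Tn) X
    <-> forall i, Lop T k dd X i = src i.
  move=> X.
  have E : forall i, CT * ((X i - Tn i) / dt) -
     (k / vol T i * (\sum_(j | adj T i j) tau T i j * Dd X i j) + X i * P i + eps * S i)
     = Lop T k dd X i - src i.
    move=> i.
    have -> : \sum_(j | adj T i j) tau T i j * Dd X i j = \sum_j tw2 T i j * (X j - X i).
      rewrite big_mkcond /=; apply: eq_bigr => j _.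
      by rewrite /tw2 /Dd; case: (adj T i j); rewrite ?mul0r.
    by rewrite /Lop /dd /src; ring.
  split => H i.
    by apply/eqP; rewrite -subr_eq0 -E subr_eq0; apply/eqP; exact: H.
  by apply/eqP; rewrite -subr_eq0 E H subrr.
split.
  have [X HX] := Lop_solve Hok Hk src Hdd.
  exists X; split; first by apply/Heq.
  move=> Y /Heq HY; apply: (Lop_inj Hok Hk Hdd) => i; by rewrite HX HY.
move=> Tnp /Heq HT; apply: (minprin_strict Hok Hk Hdd) => i; by rewrite HT.
Qed.
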